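(* Let $l_0<r_0$ and let $\rho_0:[l_0,r_0]\to[-1,1]$ be differentiable with bounded derivative, $\rho_0(l_0)=1$, $\rho_0(r_0)=-1$, and set $\bar l=(4\|\rho_0'\|_\infty)^{-1}$. Let $\tilde l$ (nondecreasing) and $\tilde r$ (nonincreasing) be continuous with $\tilde l(0)=l_0$, $\tilde r(0)=r_0$, $\tilde l<\tilde r$, and let $\rho$ solve $\partial_t\rho=\rho_{xx}$ on $\{(x,t):\tilde l(t)<x<\tilde r(t)\}$ with $\rho(\tilde l(t),t)=1$, $\rho(\tilde r(t),t)=-1$, $\rho(\cdot,0)=\rho_0$. If $\tau>0$ is such that $\tilde l(t)\le l_0+2\bar l$ and $\tilde r(t)\ge r_0-2\bar l$ for all $t<\tau$, then $$\rho(x,t)\ge0\ \ \forall t\le\tau,\ \forall x\in[\tilde l(t),l_0+2\bar l],\qquad \rho(x,t)\le0\ \ \forall t\le\tau,\ \forall x\in[r_0-2\bar l,\tilde r(t)].$$ *)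

(* Defs.v *)
From Stdlib Require Export Reals.
Open Scope R_scope.

Definition in_closed_dom (lt rt : R -> R) (T x t : R) : Prop :=
  0 <= t <= T /\ lt t <= x <= rt t.

Definition in_open_dom (lt rt : R -> R) (T x t : R) : Prop :=
  0 < t < T /\ lt t < x < rt t.

Definition cont_on_dom (rho : R -> R -> R) (lt rt : R -> R) (T : R) : Prop :=
  forall x t, in_closed_dom lt rt T x t ->
  forall eps, 0 < eps -> exists delta, 0 < delta /\
    forall y s, in_closed_dom lt rt T y s ->
      Rabs (y - x) < delta -> Rabs (s - t) < delta ->
      Rabs (rho y s - rho x t) < eps.

Definition heat_eq_interior (rho : R -> R -> R) (lt rt : R -> R) (T : R) : Prop :=
  exists rho_t rho_x rho_xx : R -> R -> R,
    forall x t, in_open_dom lt rt T x t ->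
      derivable_pt_lim (fun s => rho x s) t (rho_t x t) /\
      (forall y, lt t < y < rt t -> derivable_pt_lim (fun z => rho z t) y (rho_x y t)) /\
      derivable_pt_lim (fun z => rho_x z t) x (rho_xx x t) /\
      rho_t x t = rho_xx x t.

Definition cont_on_0T (f : R -> R) (T : R) : Prop :=
  forall t, 0 <= t <= T -> limit1_in f (fun s => 0 <= s <= T) (f t) t.

(* Main.v *)
Require Import Defs.
From Stdlib Require Import Reals Lra Classical.
From Coquelicot Require Import Coquelicot.
Open Scope R_scope.

Definition clamp (l0 r0 x : R) := Rmax l0 (Rmin r0 x).

Lemma clamp_in l0 r0 x : l0 <= r0 -> l0 <= clamp l0 r0 x <= r0.
Proof. intros; unfold clamp, Rmax, Rmin; repeat destruct Rle_dec; lra. Qed.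

Lemma clamp_id l0 r0 x : l0 <= x <= r0 -> clamp l0 r0 x = x.
Proof. intros; unfold clamp, Rmax, Rmin; repeat destruct Rle_dec; lra. Qed.

Lemma clamp_lip l0 r0 x c : l0 <= c <= r0 -> Rabs (clamp l0 r0 x - c) <= Rabs (x - c).
Proof. intros; unfold clamp, Rmax, Rmin; repeat destruct Rle_dec;
  unfold Rabs; repeat destruct Rcase_abs; lra. Qed.

Lemma mvt_rho0 l0 r0 rho0 rho0' :
  l0 < r0 ->
  (forall x, l0 <= x <= r0 -> D_in rho0 rho0' (fun y => l0 <= y <= r0) x) ->
  forall a b, l0 <= a -> a <= b -> b <= r0 ->
  exists c, l0 <= c <= r0 /\ rho0 b - rho0 a = rho0' c * (b - a).
Proof.
  intros Hlr Hd a b Ha Hab Hb.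
  destruct (Req_dec a b) as [E|E].
  { subst b. exists a. split. lra. ring. }
  set (h := fun x => rho0 (clamp l0 r0 x)).
  assert (Hc : forall c, l0 <= c <= r0 -> continuity_pt h c).
  { intros c Hcin eps Heps.
    destruct (cont_deriv _ _ _ _ (Hd c Hcin) eps Heps) as [alp [Halp H]].
    exists alp; split; auto.
    intros y [_ Hy]. unfold h. simpl in *. unfold R_dist in *.
    rewrite (clamp_id l0 r0 c) by lra.
    destruct (Req_dec (clamp l0 r0 y) c) as [E2|E2].
    - rewrite E2. unfold Rminus; rewrite Rplus_opp_r, Rabs_R0; lra.
    - apply H. split. split. apply clamp_in; lra. auto.
      simpl; unfold R_dist. eapply Rle_lt_trans. apply clamp_lip; lra. exact Hy. }
  assert (Hdr : forall x, l0 < x < r0 -> derivable_pt_lim h x (rho0' x)).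
  { intros x Hx eps Heps.
    destruct (Hd x ltac:(lra) eps Heps) as [alp [Halp H]].
    assert (Hpos : 0 < Rmin alp (Rmin (x - l0) (r0 - x))).
    { repeat apply Rmin_glb_lt; lra. }
    exists (mkposreal _ Hpos). intros hh Hh0 Hhd. simpl in Hhd.
    assert (Hm1 := Rmin_l alp (Rmin (x - l0) (r0 - x))).
    assert (Hm2 := Rmin_r alp (Rmin (x - l0) (r0 - x))).
    assert (Hm3 := Rmin_l (x - l0) (r0 - x)).
    assert (Hm4 := Rmin_r (x - l0) (r0 - x)).
    assert (Hb1 : - Rabs hh <= hh <= Rabs hh) by (unfold Rabs; destruct Rcase_abs; lra).
    unfold h. rewrite !clamp_id by lra.
    assert (HH := H (x + hh)). simpl in HH. unfold R_dist in HH.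
    replace (x + hh - x) with hh in HH by ring. apply HH.
    split. split. lra. intro Z. apply Hh0. lra. lra. }
  destruct (MVT_gen h a b rho0') as [c [Hc1 Hc2]].
  - intros x Hx. rewrite Rmin_left in Hx by lra. rewrite Rmax_right in Hx by lra.
    apply is_derive_Reals. apply Hdr. lra.
  - intros x Hx. rewrite Rmin_left in Hx by lra. rewrite Rmax_right in Hx by lra.
    apply Hc. lra.
  - rewrite Rmin_left in Hc1 by lra. rewrite Rmax_right in Hc1 by lra.
    exists c. split. lra. unfold h in Hc2. rewrite !clamp_id in Hc2 by lra. exact Hc2.
Qed.

Lemma rho0_facts l0 r0 rho0 rho0' N :
  l0 < r0 ->
  (forall x, l0 <= x <= r0 -> D_in rho0 rho0' (fun y => l0 <= y <= r0) x) ->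
  (forall x, l0 <= x <= r0 -> Rabs (rho0' x) <= N) ->
  rho0 l0 = 1 -> rho0 r0 = -1 ->
  (forall x, l0 <= x <= r0 -> 1 - N * (x - l0) <= rho0 x /\ rho0 x <= -1 + N * (r0 - x))
  /\ 2 <= N * (r0 - l0).
Proof.
  intros Hlr Hd HN H1 H2.
  assert (Hb : forall c, l0 <= c <= r0 -> - N <= rho0' c <= N).
  { intros c Hc. specialize (HN c Hc). unfold Rabs in HN; destruct Rcase_abs; lra. }
  split.
  - intros x Hx. split.
    + destruct (mvt_rho0 l0 r0 rho0 rho0' Hlr Hd l0 x) as [c [Hc E]]; try lra.
      specialize (Hb c Hc). nra.
    + destruct (mvt_rho0 l0 r0 rho0 rho0' Hlr Hd x r0) as [c [Hc E]]; try lra.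
      specialize (Hb c Hc). nra.
  - destruct (mvt_rho0 l0 r0 rho0 rho0' Hlr Hd l0 r0) as [c [Hc E]]; try lra.
    specialize (Hb c Hc). nra.
Qed.

Lemma tderiv_le0 (g : R -> R) t l r : 0 < r -> derivable_pt_lim g t l ->
  (forall s, t - r < s < t -> g t <= g s) -> l <= 0.
Proof.
  intros Hr Hd Hm. destruct (Rle_or_lt l 0) as [|Hl]; auto. exfalso.
  destruct (Hd l Hl) as [[dl Hdl] Hd2]. simpl in Hd2.
  set (h := - Rmin (dl/2) (r/2)).
  assert (Hm1 := Rmin_l (dl/2) (r/2)). assert (Hm2 := Rmin_r (dl/2) (r/2)).
  assert (Hpos : 0 < Rmin (dl/2) (r/2)) by (apply Rmin_glb_lt; lra).
  assert (Hh : h < 0) by (unfold h; lra).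
  assert (Ha : Rabs h < dl) by (rewrite Rabs_left by lra; unfold h; lra).
  specialize (Hd2 h ltac:(lra) Ha).
  assert (Hs : g t <= g (t + h)) by (apply Hm; unfold h; lra).
  assert (Hi : / h < 0) by (apply Rinv_lt_0_compat; lra).
  assert (Hq : (g (t + h) - g t) / h <= 0) by (unfold Rdiv; nra).
  revert Hd2. unfold Rabs; destruct Rcase_abs; lra.
Qed.

Lemma xderiv2_ge0 (g g' : R -> R) al be x0 l :
  al < x0 < be ->
  (forall y, al < y < be -> derivable_pt_lim g y (g' y)) ->
  derivable_pt_lim g' x0 l ->
  (forall y, al < y < be -> g x0 <= g y) -> 0 <= l.
Proof.
  intros Hx Hg Hg' Hm.
  assert (H0 : g' x0 = 0).
  { pose (pr := exist (fun l => derivable_pt_lim g x0 l) (g' x0) (Hg x0 Hx) : derivable_pt g x0).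
    assert (E := deriv_minimum g al be x0 pr ltac:(lra) ltac:(lra) ltac:(intros; apply Hm; lra)).
    exact E. }
  destruct (Rle_or_lt 0 l) as [|Hl]; auto. exfalso.
  destruct (Hg' (-l) ltac:(lra)) as [[dl Hdl] Hd2]. simpl in Hd2.
  set (h := Rmin dl (be - x0) / 2).
  assert (Hm1 := Rmin_l dl (be - x0)). assert (Hm2 := Rmin_r dl (be - x0)).
  assert (Hpos : 0 < Rmin dl (be - x0)) by (apply Rmin_glb_lt; lra).
  assert (Hneg : forall k, 0 < k <= h -> g' (x0 + k) < 0).
  { intros k Hk. assert (Ha : Rabs k < dl) by (rewrite Rabs_right by lra; unfold h in Hk; lra).
    specialize (Hd2 k ltac:(lra) Ha). rewrite H0 in Hd2.
    assert (Hi : 0 < / k) by (apply Rinv_0_lt_compat; lra).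
    assert (Hq : (g' (x0 + k) - 0) / k < 0) by (revert Hd2; unfold Rabs; destruct Rcase_abs; lra).
    unfold Rdiv in Hq. nra. }
  destruct (MVT_cor2 g g' x0 (x0 + h)) as [c [Hc1 Hc2]].
  - unfold h; lra.
  - intros c Hc. apply Hg. unfold h in Hc; lra.
  - assert (g' c < 0) by (replace c with (x0 + (c - x0)) by ring; apply Hneg; lra).
    assert (g x0 <= g (x0 + h)) by (apply Hm; unfold h; lra).
    unfold h in *. nra.
Qed.

Lemma creep (Q : R -> R -> Prop) (Dom : R -> R -> Prop) a b t0 :
  a <= b ->
  (forall x, a <= x <= b -> exists d, 0 < d /\ forall y s, Dom y s ->
       Rabs (y - x) < d -> Rabs (s - t0) < d -> Q y s) ->
  exists d, 0 < d /\ forall y s, Dom y s -> a <= y <= b -> t0 <= s < t0 + d -> Q y s.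
Proof.
  intros Hab Hloc.
  set (P := fun z => exists d, 0 < d /\ forall y s, Dom y s -> a <= y <= z -> t0 <= s < t0 + d -> Q y s).
  set (E := fun z => a <= z <= b /\ P z).
  assert (Ea : E a).
  { split. lra. destruct (Hloc a ltac:(lra)) as [d [Hd H]]. exists d; split; auto.
    intros y s Hy Hy2 Hs. apply H; auto.
    replace (y - a) with 0 by lra. rewrite Rabs_R0; lra.
    rewrite Rabs_right; lra. }
  destruct (completeness E) as [zs [Hub Hlub]].
  { exists b. intros z [Hz _]. lra. }
  { exists a. exact Ea. }
  assert (Hzs1 : a <= zs) by (apply Hub; exact Ea).
  assert (Hzs2 : zs <= b) by (apply Hlub; intros z [Hz _]; lra).
  destruct (Hloc zs ltac:(lra)) as [d0 [Hd0 H0]].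
  assert (Hex : exists z', E z' /\ zs - d0 < z').
  { apply NNPP; intro Hn. assert (zs <= zs - d0); [|lra].
    apply Hlub. intros z Ez. apply Rnot_lt_le. intro Hlt. apply Hn. exists z; auto. }
  destruct Hex as [z' [[Hz' [d1 [Hd1 H1]]] Hz'2]].
  set (z'' := Rmin (zs + d0/2) b).
  assert (Hm1 := Rmin_l (zs + d0/2) b). assert (Hm2 := Rmin_r (zs + d0/2) b).
  assert (Pz : P z'').
  { exists (Rmin d0 d1). split. apply Rmin_glb_lt; lra.
    assert (Hn1 := Rmin_l d0 d1). assert (Hn2 := Rmin_r d0 d1).
    intros y s Hy Hy2 Hs. unfold z'' in Hy2. destruct (Rle_or_lt y z') as [Hyz|Hyz].
    - apply H1; auto; lra.
    - apply H0; auto.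
      + unfold Rabs; destruct Rcase_abs; lra.
      + rewrite Rabs_right; lra. }
  assert (Ez : E z'').
  { split; auto. unfold z''; split. apply Rmin_glb; lra. lra. }
  assert (Hle := Hub _ Ez).
  assert (Hzb : z'' = b).
  { unfold z'' in *. destruct (Rle_dec (zs + d0/2) b).
    - rewrite Rmin_left in Hle by lra. lra.
    - rewrite Rmin_right by lra. reflexivity. }
  rewrite Hzb in Pz. exact Pz.
Qed.

Lemma mp (lt rt : R -> R) (tau eps : R) (v vt vx vxx : R -> R -> R) :
 0 < tau -> 0 < eps ->
 (forall s t, 0 <= s -> s <= t -> t <= tau -> lt s <= lt t) ->
 (forall s t, 0 <= s -> s <= t -> t <= tau -> rt t <= rt s) ->
 cont_on_dom v lt rt tau ->
 (forall x t, in_open_dom lt rt tau x t ->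
   derivable_pt_lim (fun s => v x s) t (vt x t) /\
   (forall y, lt t < y < rt t -> derivable_pt_lim (fun z => v z t) y (vx y t)) /\
   derivable_pt_lim (fun z => vx z t) x (vxx x t) /\ vt x t = vxx x t + eps) ->
 (forall t, 0 <= t < tau -> 0 < v (lt t) t /\ 0 < v (rt t) t) ->
 (forall x, lt 0 <= x <= rt 0 -> 0 < v x 0) ->
 forall x t, in_closed_dom lt rt tau x t -> 0 <= v x t.
Proof.
  intros Htau Heps Hlm Hrm Hc Hh Hbd Hin.
  set (Good := fun t => forall s y, 0 <= s <= t -> lt s <= y <= rt s -> 0 < v y s).
  set (S := fun t => 0 <= t <= tau /\ Good t).
  assert (S0 : S 0).
  { split. lra. intros s y Hs Hy. replace s with 0 in * by lra. apply Hin; auto. }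
  destruct (completeness S) as [ts [Hub Hlub]].
  { exists tau. intros z [Hz _]. lra. }
  { exists 0; exact S0. }
  assert (Hts0 : 0 <= ts) by (apply Hub; exact S0).
  assert (Hts1 : ts <= tau) by (apply Hlub; intros z [Hz _]; lra).
  assert (ClA : forall s y, 0 <= s < ts -> lt s <= y <= rt s -> 0 < v y s).
  { intros s y Hs Hy. destruct (classic (exists t, S t /\ s < t)) as [[t [[_ Gt] Hst]]|Hn].
    - apply (Gt s y); auto; lra.
    - exfalso. assert (ts <= s); [|lra]. apply Hlub. intros z Sz.
      apply Rnot_lt_le. intro. apply Hn. exists z; auto. }
  assert (ClB : forall y, lt ts <= y <= rt ts -> 0 <= v y ts).
  { intros y Hy. destruct (Req_dec ts 0) as [E|E].
    - rewrite E in *. left. apply Hin; auto.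
    - apply Rnot_lt_le. intro Hneg.
      destruct (Hc y ts ltac:(split; [lra|exact Hy]) (- v y ts) ltac:(lra)) as [d [Hd H]].
      assert (Hex : exists s, 0 <= s /\ ts - d < s < ts).
      { exists (Rmax (ts - d/2) (ts/2)).
        assert (Hs1 := Rmax_l (ts - d/2) (ts/2)). assert (Hs2 := Rmax_r (ts - d/2) (ts/2)).
        assert (Rmax (ts - d/2) (ts/2) < ts) by (apply Rmax_lub_lt; lra). lra. }
      destruct Hex as [s [Hs2 [Hs1 Hs3]]].
      assert (Hy' : lt s <= y <= rt s).
      { split. apply Rle_trans with (lt ts); [apply Hlm|]; lra.
        apply Rle_trans with (rt ts); [lra|apply Hrm]; lra. }
      assert (Hpos := ClA s y ltac:(lra) Hy').
      assert (HH := H y s ltac:(split; [lra|exact Hy'])).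
      unfold Rminus in HH. rewrite Rplus_opp_r, Rabs_R0 in HH.
      specialize (HH ltac:(lra)).
      assert (Hsd : Rabs (s + - ts) < d) by (rewrite Rabs_left by lra; lra).
      specialize (HH Hsd). revert HH. unfold Rabs; destruct Rcase_abs; lra. }
  assert (Hts : ts = tau).
  { destruct (Req_dec ts tau) as [|Hne]; auto. exfalso.
    assert (Htl : ts < tau) by lra.
    destruct (classic (exists y, lt ts <= y <= rt ts /\ v y ts <= 0)) as [[y0 [Hy0 Hv0]]|Hall].
    - assert (Hz : v y0 ts = 0) by (assert (Hp := ClB y0 Hy0); lra).
      destruct (Hbd ts ltac:(lra)) as [Hb1 Hb2].
      assert (Hy0' : lt ts < y0 < rt ts).
      { split; [destruct (Req_dec (lt ts) y0) as [E|E]|destruct (Req_dec y0 (rt ts)) as [E|E]];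
        try (subst y0; lra); lra. }
      assert (Htp : 0 < ts).
      { destruct (Req_dec ts 0) as [E|E]; [|lra]. exfalso. rewrite E in *.
        assert (Hp := Hin y0 ltac:(lra)). lra. }
      destruct (Hh y0 ts ltac:(split; lra)) as [H1 [H2 [H3 H4]]].
      assert (Hvt : vt y0 ts <= 0).
      { apply (tderiv_le0 (fun s => v y0 s) ts (vt y0 ts) ts); auto.
        intros s Hs. simpl. rewrite Hz. left. apply ClA. lra.
        split. apply Rle_trans with (lt ts); [apply Hlm|]; lra.
        apply Rle_trans with (rt ts); [lra|apply Hrm]; lra. }
      assert (Hvxx : 0 <= vxx y0 ts).
      { apply (xderiv2_ge0 (fun z => v z ts) (fun z => vx z ts) (lt ts) (rt ts) y0); auto.
        intros y Hy. simpl. rewrite Hz. apply ClB. lra. }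
      lra.
    - assert (Hall' : forall y, lt ts <= y <= rt ts -> 0 < v y ts).
      { intros y Hy. apply Rnot_le_lt. intro. apply Hall. exists y; auto. }
      assert (Hcr : exists d, 0 < d /\ forall y s, in_closed_dom lt rt tau y s ->
                lt ts <= y <= rt ts -> ts <= s < ts + d -> 0 < v y s).
      { destruct (Rle_or_lt (lt ts) (rt ts)) as [Hab|Hab].
        - apply creep; auto. intros x Hx.
          assert (Hp := Hall' x Hx).
          destruct (Hc x ts ltac:(split; [lra|exact Hx]) (v x ts) Hp) as [d [Hd H]].
          exists d; split; auto. intros y s Hdom Hy Hs.
          specialize (H y s Hdom Hy Hs). revert H. unfold Rabs; destruct Rcase_abs; lra.
        - exists 1. split. lra. intros. lra. }
      destruct Hcr as [d [Hd Hcr]].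
      set (t' := Rmin (ts + d/2) tau).
      assert (Hm1 := Rmin_l (ts + d/2) tau). assert (Hm2 := Rmin_r (ts + d/2) tau).
      assert (St' : S t').
      { split. unfold t'; split. apply Rmin_glb; lra. lra.
        intros s y Hs Hy. destruct (Rlt_or_le s ts) as [Hl|Hl].
        - apply ClA; auto. lra.
        - apply Hcr. split. unfold t' in Hs; lra. exact Hy.
          split. apply Rle_trans with (lt s); [apply Hlm|]; unfold t' in Hs; lra.
          apply Rle_trans with (rt s); [lra|apply Hrm]; unfold t' in Hs; lra.
          unfold t' in Hs; lra. }
      assert (Hle := Hub _ St'). unfold t' in Hle.
      assert (ts + d/2 <= tau \/ tau < ts + d/2) as [Hc1|Hc1] by lra.
      + rewrite Rmin_left in Hle by lra. lra.
      + rewrite Rmin_right in Hle by lra. lra. }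
  intros x t [Ht Hx]. destruct (Rlt_or_le t ts) as [Hl|Hl].
  - left. apply ClA; auto. lra.
  - assert (t = ts) by lra. subst t. apply ClB; auto.
Qed.

Lemma dtrans (f g : R -> R) x l a b c :
  (forall y, g y = a * f y + b + c * y) -> derivable_pt_lim f x l ->
  derivable_pt_lim g x (a * l + c).
Proof.
  intros E H eps Heps.
  assert (Ha : 0 < Rabs a + 1) by (assert (Hh := Rabs_pos a); lra).
  destruct (H (eps / (Rabs a + 1))) as [d Hd].
  { apply Rdiv_lt_0_compat; lra. }
  exists d. intros h Hh0 Hh.
  specialize (Hd h Hh0 Hh).
  replace ((g (x + h) - g x) / h - (a * l + c)) with (a * ((f (x + h) - f x) / h - l))
    by (rewrite !E; field; auto).
  rewrite Rabs_mult.
  assert (Hp := Rabs_pos ((f (x + h) - f x) / h - l)).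
  assert (Hp2 := Rabs_pos a).
  apply Rle_lt_trans with ((Rabs a + 1) * Rabs ((f (x + h) - f x) / h - l)). nra.
  apply Rlt_le_trans with ((Rabs a + 1) * (eps / (Rabs a + 1))).
  apply Rmult_lt_compat_l; auto. right; field; lra.
Qed.

Lemma ctrans rho lt rt tau a b c d :
  cont_on_dom rho lt rt tau ->
  cont_on_dom (fun x t => a * rho x t + b + c * x + d * t) lt rt tau.
Proof.
  intros H x t Hd eps Heps.
  assert (Ha := Rabs_pos a). assert (Hc := Rabs_pos c). assert (Hdd := Rabs_pos d).
  destruct (H x t Hd (eps / 2 / (Rabs a + 1))) as [del [Hdel Hdl]].
  { apply Rdiv_lt_0_compat; lra. }
  set (e1 := eps / 4 / (Rabs c + 1)). set (e2 := eps / 4 / (Rabs d + 1)).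
  assert (He1 : 0 < e1) by (unfold e1; apply Rdiv_lt_0_compat; lra).
  assert (He2 : 0 < e2) by (unfold e2; apply Rdiv_lt_0_compat; lra).
  exists (Rmin del (Rmin e1 e2)). split.
  { repeat apply Rmin_glb_lt; lra. }
  intros y s Hds Hy Hs.
  assert (Hm1 := Rmin_l del (Rmin e1 e2)). assert (Hm2 := Rmin_r del (Rmin e1 e2)).
  assert (Hm3 := Rmin_l e1 e2). assert (Hm4 := Rmin_r e1 e2).
  assert (R1 := Hdl y s Hds ltac:(lra) ltac:(lra)).
  replace (a * rho y s + b + c * y + d * s - (a * rho x t + b + c * x + d * t))
    with (a * (rho y s - rho x t) + c * (y - x) + d * (s - t)) by ring.
  eapply Rle_lt_trans. apply Rabs_triang. eapply Rle_lt_trans.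
  apply Rplus_le_compat_r. apply Rabs_triang. rewrite !Rabs_mult.
  assert (P1 := Rabs_pos (rho y s - rho x t)).
  assert (P2 := Rabs_pos (y - x)). assert (P3 := Rabs_pos (s - t)).
  assert (B1 : Rabs a * Rabs (rho y s - rho x t) <= eps / 2).
  { apply Rle_trans with ((Rabs a + 1) * Rabs (rho y s - rho x t)). nra.
    apply Rle_trans with ((Rabs a + 1) * (eps / 2 / (Rabs a + 1))).
    apply Rmult_le_compat_l; lra. right; field; lra. }
  assert (B2 : Rabs c * Rabs (y - x) < eps / 4).
  { apply Rle_lt_trans with ((Rabs c + 1) * Rabs (y - x)). nra.
    apply Rlt_le_trans with ((Rabs c + 1) * e1).
    apply Rmult_lt_compat_l; lra. right; unfold e1; field; lra. }
  assert (B3 : Rabs d * Rabs (s - t) < eps / 4).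
  { apply Rle_lt_trans with ((Rabs d + 1) * Rabs (s - t)). nra.
    apply Rlt_le_trans with ((Rabs d + 1) * e2).
    apply Rmult_lt_compat_l; lra. right; unfold e2; field; lra. }
  lra.
Qed.

Lemma apply_mp (lt rt : R -> R) (tau : R) (rho : R -> R -> R) a b c :
 0 < tau ->
 (forall s t, 0 <= s -> s <= t -> t <= tau -> lt s <= lt t) ->
 (forall s t, 0 <= s -> s <= t -> t <= tau -> rt t <= rt s) ->
 cont_on_dom rho lt rt tau ->
 heat_eq_interior rho lt rt tau ->
 (forall t, 0 <= t < tau -> 0 <= a * rho (lt t) t + b + c * lt t /\
                            0 <= a * rho (rt t) t + b + c * rt t) ->
 (forall x, lt 0 <= x <= rt 0 -> 0 <= a * rho x 0 + b + c * x) ->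
 forall x t, in_closed_dom lt rt tau x t -> 0 <= a * rho x t + b + c * x.
Proof.
  intros Htau Hlm Hrm Hc [rt' [rx [rxx Hh]]] Hbd Hin x t Hd.
  apply Rnot_lt_le. intro Hneg.
  set (w := a * rho x t + b + c * x) in *.
  assert (Ht : 0 <= t) by (destruct Hd as [[? ?] ?]; lra).
  set (eps := - w / (2 * (1 + t))).
  assert (Heps : 0 < eps) by (unfold eps; apply Rdiv_lt_0_compat; lra).
  assert (M := mp lt rt tau eps (fun x t => a * rho x t + (b + eps) + c * x + eps * t)
     (fun x t => a * rt' x t + eps) (fun x t => a * rx x t + c) (fun x t => a * rxx x t)
     Htau Heps Hlm Hrm (ctrans rho lt rt tau a (b + eps) c eps Hc)).
  assert (Hw : 0 <= a * rho x t + (b + eps) + c * x + eps * t).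
  { apply M; auto.
    - intros y s Hy. destruct (Hh y s Hy) as [H1 [H2 [H3 H4]]]. split; [|split; [|split]].
      + apply (dtrans (fun s => rho y s)) with (b := b + eps + c * y); auto.
        intros; ring.
      + intros z Hz. apply (dtrans (fun z => rho z s)) with (b := b + eps + eps * s); auto.
        intros; ring.
      + replace (a * rxx y s) with (a * rxx y s + 0) by ring.
        apply (dtrans (fun z => rx z s)) with (b := c); auto. intros; ring.
      + rewrite H4. ring.
    - intros s Hs. destruct (Hbd s Hs) as [B1 B2]. split; nra.
    - intros y Hy. assert (Hi := Hin y Hy). nra. }
  assert (E : a * rho x t + (b + eps) + c * x + eps * t = w + eps * (1 + t)) by (unfold w; ring).
  rewrite E in Hw. unfold eps in Hw.
  replace (- w / (2 * (1 + t)) * (1 + t)) with (- w / 2) in Hw by (field; lra).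
  lra.
Qed.

Lemma lim_le (f : R -> R) tau K : 0 < tau -> cont_on_0T f tau ->
  (forall t, 0 <= t < tau -> f t <= K) -> f tau <= K.
Proof.
  intros Ht Hc H. apply Rnot_lt_le. intro Hl.
  destruct (Hc tau ltac:(lra) (f tau - K) ltac:(lra)) as [al [Hal Ha]].
  set (t := Rmax (tau - al/2) (tau/2)).
  assert (H1 := Rmax_l (tau - al/2) (tau/2)). assert (H2 := Rmax_r (tau - al/2) (tau/2)).
  assert (H3 : t < tau) by (unfold t; apply Rmax_lub_lt; lra).
  fold t in H1, H2.
  assert (Hd := Ha t). simpl in Hd. unfold R_dist in Hd.
  assert (Hft := H t ltac:(lra)).
  assert (Hd2 : Rabs (f t - f tau) < f tau - K).
  { apply Hd. split. lra. rewrite Rabs_left by lra. lra. }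
  revert Hd2. unfold Rabs; destruct Rcase_abs; lra.
Qed.

Lemma lim_ge (f : R -> R) tau K : 0 < tau -> cont_on_0T f tau ->
  (forall t, 0 <= t < tau -> K <= f t) -> K <= f tau.
Proof.
  intros Ht Hc H. apply Rnot_lt_le. intro Hl.
  destruct (Hc tau ltac:(lra) (K - f tau) ltac:(lra)) as [al [Hal Ha]].
  set (t := Rmax (tau - al/2) (tau/2)).
  assert (H1 := Rmax_l (tau - al/2) (tau/2)). assert (H2 := Rmax_r (tau - al/2) (tau/2)).
  assert (H3 : t < tau) by (unfold t; apply Rmax_lub_lt; lra).
  fold t in H1, H2.
  assert (Hd := Ha t). simpl in Hd. unfold R_dist in Hd.
  assert (Hft := H t ltac:(lra)).
  assert (Hd2 : Rabs (f t - f tau) < K - f tau).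
  { apply Hd. split. lra. rewrite Rabs_left by lra. lra. }
  revert Hd2. unfold Rabs; destruct Rcase_abs; lra.
Qed.

Theorem lemma3p4
  (l0 r0 : R) (rho0 rho0' : R -> R) (Ninf : R)
  (lt rt : R -> R) (rho : R -> R -> R) (tau : R)
  (Hl0r0 : l0 < r0)
  (Hrange : forall x, l0 <= x <= r0 -> -1 <= rho0 x <= 1)
  (Hdiff : forall x, l0 <= x <= r0 -> D_in rho0 rho0' (fun y => l0 <= y <= r0) x)
  (Hbdd : exists M, forall x, l0 <= x <= r0 -> Rabs (rho0' x) <= M)
  (HNinf : is_lub (fun y => exists x, l0 <= x <= r0 /\ y = Rabs (rho0' x)) Ninf)
  (Hleft0 : rho0 l0 = 1) (Hright0 : rho0 r0 = -1)
  (Htau : 0 < tau)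
  (Hlt_cont : cont_on_0T lt tau) (Hrt_cont : cont_on_0T rt tau)
  (Hlt_mono : forall s t, 0 <= s -> s <= t -> t <= tau -> lt s <= lt t)
  (Hrt_mono : forall s t, 0 <= s -> s <= t -> t <= tau -> rt t <= rt s)
  (Hlt0 : lt 0 = l0) (Hrt0 : rt 0 = r0)
  (Hltrt : forall t, 0 <= t <= tau -> lt t < rt t)
  (Hcont : cont_on_dom rho lt rt tau)
  (Hheat : heat_eq_interior rho lt rt tau)
  (HbcL : forall t, 0 <= t <= tau -> rho (lt t) t = 1)
  (HbcR : forall t, 0 <= t <= tau -> rho (rt t) t = -1)
  (Hinit : forall x, l0 <= x <= r0 -> rho x 0 = rho0 x)
  (HconfL : forall t, 0 <= t < tau -> lt t <= l0 + 2 * / (4 * Ninf))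
  (HconfR : forall t, 0 <= t < tau -> r0 - 2 * / (4 * Ninf) <= rt t) :
  (forall t x, 0 <= t <= tau -> lt t <= x <= l0 + 2 * / (4 * Ninf) -> 0 <= rho x t) /\
  (forall t x, 0 <= t <= tau -> r0 - 2 * / (4 * Ninf) <= x <= rt t -> rho x t <= 0).
Proof.
  destruct HNinf as [HubN _].
  assert (Hbnd : forall x, l0 <= x <= r0 -> Rabs (rho0' x) <= Ninf).
  { intros x Hx. apply HubN. exists x; auto. }
  destruct (rho0_facts l0 r0 rho0 rho0' Ninf Hl0r0 Hdiff Hbnd Hleft0 Hright0) as [Hf Hlen].
  assert (HN : 0 < Ninf) by nra.
  set (lb := / (4 * Ninf)) in *.
  assert (Hlb : Ninf * lb = 1/4) by (unfold lb; field; lra).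
  assert (Hlbp : 0 < lb) by (unfold lb; apply Rinv_0_lt_compat; lra).
  assert (Hlen' : 8 * lb <= r0 - l0).
  { assert (2 * lb <= Ninf * (r0 - l0) * lb) by (apply Rmult_le_compat_r; lra). nra. }
  assert (Hltge : forall t, 0 <= t <= tau -> l0 <= lt t).
  { intros t Ht. rewrite <- Hlt0. apply Hlt_mono; lra. }
  assert (Hrtle : forall t, 0 <= t <= tau -> rt t <= r0).
  { intros t Ht. rewrite <- Hrt0. apply Hrt_mono; lra. }
  assert (HcL : forall t, 0 <= t <= tau -> lt t <= l0 + 2 * lb).
  { intros t Ht. destruct (Req_dec t tau) as [E|E].
    - subst t. apply lim_le; auto.
    - apply HconfL; lra. }
  assert (HcR : forall t, 0 <= t <= tau -> r0 - 2 * lb <= rt t).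
  { intros t Ht. destruct (Req_dec t tau) as [E|E].
    - subst t. apply lim_ge; auto.
    - apply HconfR; lra. }
  split.
  - intros t x Ht Hx.
    assert (Hd : in_closed_dom lt rt tau x t).
    { split; auto. split. lra. assert (H := HcR t Ht). lra. }
    assert (M := apply_mp lt rt tau rho 1 (-1 - 2 * Ninf * l0) (2 * Ninf) Htau Hlt_mono Hrt_mono
             Hcont Hheat).
    assert (Hx2 : 0 <= 1 * rho x t + (-1 - 2 * Ninf * l0) + 2 * Ninf * x).
    { apply M; auto.
      - intros s Hs. rewrite HbcL, HbcR by lra.
        assert (H1 := Hltge s ltac:(lra)). assert (H2 := HcR s ltac:(lra)).
        split. nra.
        assert (0 <= Ninf * (rt s - l0 - 6 * lb)) by (apply Rmult_le_pos; lra). nra.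
      - intros y Hy. rewrite Hlt0, Hrt0 in Hy. rewrite Hinit by lra.
        destruct (Hf y Hy) as [F1 F2]. nra. }
    assert (0 <= Ninf * (l0 + 2 * lb - x)) by (apply Rmult_le_pos; lra). nra.
  - intros t x Ht Hx.
    assert (Hd : in_closed_dom lt rt tau x t).
    { split; auto. split. assert (H := HcL t Ht). lra. lra. }
    assert (M := apply_mp lt rt tau rho (-1) (-1 + 2 * Ninf * r0) (- (2 * Ninf)) Htau Hlt_mono Hrt_mono
             Hcont Hheat).
    assert (Hx2 : 0 <= -1 * rho x t + (-1 + 2 * Ninf * r0) + - (2 * Ninf) * x).
    { apply M; auto.
      - intros s Hs. rewrite HbcL, HbcR by lra.
        assert (H1 := HcL s ltac:(lra)). assert (H2 := Hrtle s ltac:(lra)).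
        split.
        + assert (0 <= Ninf * (r0 - lt s - 6 * lb)) by (apply Rmult_le_pos; lra). nra.
        + nra.
      - intros y Hy. rewrite Hlt0, Hrt0 in Hy. rewrite Hinit by lra.
        destruct (Hf y Hy) as [F1 F2]. nra. }
    assert (0 <= Ninf * (x - (r0 - 2 * lb))) by (apply Rmult_le_pos; lra). nra.
Qed.
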